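(* For every integer $n\ge3$, the number of cusps of $\Gamma_n$ equals $$\frac{n^2}{2}\prod_{p\mid n,\ p\text{ prime}}\left(1-p^{-2}\right).$$
   Context: $\Gamma_n=\left\{\begin{pmatrix}a&b\\c&d\end{pmatrix}\in\mathrm{SL}_2(\mathbb Z):n^2\mid c,\ a\equiv d\equiv\pm1\pmod n\right\}$. The cusps of $\Gamma_n$ are the orbits of $\Gamma_n$ acting by Möbius transformations on $\mathbb Q\cup\{\infty\}$. *)

(* Defs.v *)
From mathcomp Require Import all_boot all_order all_algebra.
Set Implicit Arguments. Unset Strict Implicit. Unset Printing Implicit Defensive.
Import Order.TTheory GRing.Theory Num.Theory.
Local Open Scope ring_scope.

Definition ma (g : 'M[int]_2) : int := g ord0 ord0.
Definition mb (g : 'M[int]_2) : int := g ord0 ord_max.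
Definition mc (g : 'M[int]_2) : int := g ord_max ord0.
Definition md (g : 'M[int]_2) : int := g ord_max ord_max.

Definition in_Gamma (n : nat) (g : 'M[int]_2) : Prop :=
  \det g = 1 /\
  (((n ^ 2)%N)%:Z %| mc g)%Z /\
  (((ma g = 1 %[mod n%:Z])%Z /\ (md g = 1 %[mod n%:Z])%Z) \/
   ((ma g = -1 %[mod n%:Z])%Z /\ (md g = -1 %[mod n%:Z])%Z)).

(* P^1(Q) = Q u {oo}, with None = oo. *)
Definition cuspQ := option rat.

Definition mobius (g : 'M[int]_2) (x : cuspQ) : cuspQ :=
  let a : rat := (ma g)%:~R in let b : rat := (mb g)%:~R in
  let c : rat := (mc g)%:~R in let d : rat := (md g)%:~R in
  match x with
  | None => if c == 0 then None else Some (a / c)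
  | Some q => if c * q + d == 0 then None else Some ((a * q + b) / (c * q + d))
  end.

Definition Gamma_equiv (n : nat) (x y : cuspQ) : Prop :=
  exists g, in_Gamma n g /\ mobius g x = y.

(* s is a complete system of pairwise inequivalent representatives of the
   cusps (Gamma_n-orbits on Q u {oo}); its size is the number of cusps. *)
Definition cusp_transversal (n : nat) (s : seq cuspQ) : Prop :=
  (forall i j, (i < size s)%N -> (j < size s)%N -> i <> j ->
     ~ Gamma_equiv n (nth None s i) (nth None s j)) /\
  (forall x : cuspQ, exists2 y, y \in s & Gamma_equiv n y x).

Definition cusp_formula (n : nat) : rat :=
  ((n ^ 2)%N)%:R / 2 * \prod_(p <- primes n) (1 - (((p ^ 2)%N)%:R)^-1).

(* Main.v *)
Require Import Defs.
From mathcomp Require Import all_boot all_order all_algebra.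
From mathcomp Require Import ring zify.
Set Implicit Arguments. Unset Strict Implicit. Unset Printing Implicit Defensive.
Import Order.TTheory GRing.Theory Num.Theory.
Local Open Scope ring_scope.

Lemma det2 (A : 'M[int]_2) : \det A = A ord0 ord0 * A ord_max ord_max - A ord0 ord_max * A ord_max ord0.
Proof.
rewrite (expand_det_row _ ord0) !big_ord_recr big_ord0 /= add0r /cofactor.
rewrite !det_mx11 /= !mxE /=.
have -> : widen_ord (leqnSn 1) ord_max = ord0 :> 'I_2 by apply: val_inj.
have -> : lift ord0 (0 : 'I_1) = ord_max :> 'I_2 by apply: val_inj.
have -> : lift ord_max (0 : 'I_1) = ord0 :> 'I_2 by apply: val_inj.
rewrite expr0 expr1 !mul1r mulN1r mulrN.
by [].
Qed.

Definition toM (a b c d : int) : 'M[int]_2 :=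
  \matrix_(i < 2, j < 2) if i == ord0 then (if j == ord0 then a else b)
                         else (if j == ord0 then c else d).

Lemma toM_a a b c d : ma (toM a b c d) = a. Proof. by rewrite /ma mxE. Qed.
Lemma toM_b a b c d : mb (toM a b c d) = b. Proof. by rewrite /mb mxE. Qed.
Lemma toM_c a b c d : mc (toM a b c d) = c. Proof. by rewrite /mc mxE. Qed.
Lemma toM_d a b c d : md (toM a b c d) = d. Proof. by rewrite /md mxE. Qed.

Lemma detE (g : 'M[int]_2) : \det g = ma g * md g - mb g * mc g.
Proof. by rewrite det2. Qed.

Lemma det_toM a b c d : \det (toM a b c d) = a * d - b * c.
Proof. by rewrite detE toM_a toM_b toM_c toM_d. Qed.

Definition vc (v : int * int) : cuspQ :=
  if v.2 == 0 then None else Some (v.1%:~R / v.2%:~R).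

Definition R (x : cuspQ) : int * int :=
  match x with None => (1, 0) | Some q => (numq q, denq q) end.

Definition prim (v : int * int) := coprimez v.1 v.2.

Definition negv (v : int * int) : int * int := (- v.1, - v.2).

Lemma vc_neg v : vc (negv v) = vc v.
Proof.
rewrite /vc /= oppr_eq0; case: eqP => // _.
by rewrite !rmorphN /= invrN mulrNN.
Qed.

Lemma vcR x : vc (R x) = x.
Proof.
case: x => [q|] //=; rewrite /vc /= denq_eq0 /=.
by rewrite divq_num_den.
Qed.

Lemma primR x : prim (R x).
Proof.
case: x => [q|]; rewrite /prim /=; last by rewrite coprimezE.
by rewrite coprimezE coprime_num_den.
Qed.

Lemma prim_vc v x : prim v -> vc v = x -> v = R x \/ v = negv (R x).
Proof.
case: v => p q; rewrite /prim /vc /=; case: eqP => [-> | /eqP q0].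
  move=> cop <-; rewrite coprimezE /coprime /= gcdn0 in cop.
  have : `|p| = 1%N by apply/eqP.
  by case: p cop => [[|[|k]]|[|k]] //= _ _; [left | right].
move=> cop <- /=; rewrite coprimezE in cop.
rewrite coprimeq_num // coprimeq_den // (negbTE q0).
have [q_gt0|q_lt0] := ltrP 0 q.
  left; rewrite gtr0_sg // mul1r gtr0_norm //.
have q_lt0' : q < 0 by rewrite lt_neqAle q0 q_lt0.
right; rewrite ltr0_sg // ltr0_norm // /negv /=. by rewrite mulN1r !opprK.
Qed.


Definition act (g : 'M[int]_2) (v : int * int) : int * int :=
  (ma g * v.1 + mb g * v.2, mc g * v.1 + md g * v.2).

Lemma intr_eq0' (z : int) : ((z%:~R : rat) == 0) = (z == 0).
Proof. by rewrite intr_eq0. Qed.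

Lemma mobius_vc g v : (v.1 != 0) || (v.2 != 0) -> mobius g (vc v) = vc (act g v).
Proof.
case: v => p q /=; rewrite /vc /act /mobius /=.
have [->|q0] := eqVneq q 0.
  rewrite orbF => p0.
  rewrite !mulr0 !addr0 mulf_eq0 (negbTE p0) orbF intr_eq0'.
  case: eqP => // c0.
  congr Some; rewrite !rmorphM /=.
  have p0' : (p%:~R : rat) != 0 by rewrite intr_eq0'.
  by field; apply/andP; split => //; rewrite intr_eq0'; apply/eqP.
move=> _.
have q0' : (q%:~R : rat) != 0 by rewrite intr_eq0'.
have E : (mc g)%:~R * (p%:~R / q%:~R) + (md g)%:~R =
   ((mc g * p + md g * q)%:~R : rat) / q%:~R.
  by rewrite rmorphD !rmorphM /=; field.
rewrite E mulf_eq0 invr_eq0 (negbTE q0') orbF intr_eq0'.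
case: eqP => // /eqP d0.
have d0' : ((mc g * p + md g * q)%:~R : rat) != 0 by rewrite intr_eq0'.
congr Some; rewrite !rmorphD !rmorphM /=.
rewrite rmorphD !rmorphM /= in d0'.
by field; rewrite q0' d0'.
Qed.

Definition phi (n : nat) (x : cuspQ) : cuspQ :=
  match x with None => None | Some q => Some (n%:R * q) end.
Definition psi (n : nat) (x : cuspQ) : cuspQ :=
  match x with None => None | Some q => Some (q / n%:R) end.

Lemma phi_psi n x : (0 < n)%N -> phi n (psi n x) = x.
Proof.
move=> n0; case: x => [q|] //=; congr Some.
have : (n%:R : rat) != 0 by rewrite pnatr_eq0 -lt0n.
by move=> h; field.
Qed.

Lemma phi_inj n : (0 < n)%N -> injective (phi n).
Proof.
move=> n0 [x|] [y|] //= [].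
have nz : (n%:R : rat) != 0 by rewrite pnatr_eq0 -lt0n.
by move/(mulfI nz) => ->.
Qed.

Lemma phi_mobius n a b c d x : (0 < n)%N ->
  phi n (mobius (toM a b (n%:Z * c) d) x) = mobius (toM a (n%:Z * b) c d) (phi n x).
Proof.
move=> n0; have nz : (n%:R : rat) != 0 by rewrite pnatr_eq0 -lt0n.
rewrite /mobius !toM_a !toM_b !toM_c !toM_d.
case: x => [q|] /=.
  have E : ((n%:Z * c)%:~R * q + d%:~R : rat) = c%:~R * (n%:R * q) + d%:~R.
    by rewrite rmorphM /= mulrA [_ * c%:~R]mulrC; congr (_ * _ + _).
  rewrite E; case: eqP => //= _; congr Some.
  rewrite rmorphM /=.
  have -> : ((n%:Z)%:~R : rat) = n%:R by [].
  by rewrite mulrA; congr (_ * _); ring.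
have E : ((n%:Z * c)%:~R : rat) = n%:R * c%:~R by rewrite rmorphM.
rewrite E mulf_eq0 (negbTE nz) /=; case: eqP => //= /eqP c0.
by congr Some; field; rewrite nz c0.
Qed.


Lemma dvd_lin2 (n a b x y : int) : (n %| x)%Z -> (n %| y)%Z -> (n %| a * x + b * y)%Z.
Proof. by move=> hx hy; rewrite rpredD // dvdz_mull. Qed.

Lemma dvd_lin4 (n a b c d x y z w : int) : (n %| x)%Z -> (n %| y)%Z -> (n %| z)%Z -> (n %| w)%Z ->
  (n %| a * x + b * y + c * z + d * w)%Z.
Proof. by move=> hx hy hz hw; rewrite !rpredD // dvdz_mull. Qed.

Definition cpm (n : nat) (v w : int * int) :=
  exists e : int, e * e = 1 /\ (n%:Z %| v.1 - e * w.1)%Z /\ (n%:Z %| v.2 - e * w.2)%Z.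

Lemma cpm_refl n v : cpm n v v.
Proof. by exists 1; rewrite mulr1 !mul1r !subrr !dvdz0. Qed.

Lemma cpm_sym n v w : cpm n v w -> cpm n w v.
Proof.
move=> [e [e2 [h1 h2]]]; exists e; split => //.
split.
  have -> : w.1 - e * v.1 = (- e) * (v.1 - e * w.1) + (1 - e * e) * w.1 by ring.
  by rewrite e2 subrr mul0r addr0 dvdz_mull.
have -> : w.2 - e * v.2 = (- e) * (v.2 - e * w.2) + (1 - e * e) * w.2 by ring.
by rewrite e2 subrr mul0r addr0 dvdz_mull.
Qed.

Lemma cpm_trans n u v w : cpm n u v -> cpm n v w -> cpm n u w.
Proof.
move=> [e [e2 [h1 h2]]] [f [f2 [k1 k2]]]; exists (e * f); split.
  by rewrite mulrACA e2 f2 mulr1.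
split.
  have -> : u.1 - e * f * w.1 = 1 * (u.1 - e * v.1) + e * (v.1 - f * w.1) by ring.
  exact: dvd_lin2.
have -> : u.2 - e * f * w.2 = 1 * (u.2 - e * v.2) + e * (v.2 - f * w.2) by ring.
exact: dvd_lin2.
Qed.

Lemma cpm_negr n v w : cpm n v (negv w) -> cpm n v w.
Proof.
move=> [e [e2 [h1 h2]]]; exists (- e); split; first by rewrite mulrNN.
by rewrite /negv /= !mulrN !mulNr in h1 h2 *.
Qed.

Lemma cpm_negl n v w : cpm n (negv v) w -> cpm n v w.
Proof. by move=> h; apply/cpm_sym/cpm_negr/cpm_sym. Qed.

Lemma pm_or (v : int * int) x : v = x \/ v = negv x -> forall n, cpm n v x.
Proof.
case=> -> n; first exact: cpm_refl.
exists (-1); split; first by rewrite mulrNN mulr1.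
by rewrite /negv /= !mulN1r !opprK !addNr !dvdz0.
Qed.

Lemma prim_nz v : prim v -> (v.1 != 0) || (v.2 != 0).
Proof.
case: v => p q; rewrite /prim /=.
by case: eqP => [->|] //=; case: eqP => [->|] //=; rewrite coprimezE.
Qed.

Lemma prim_act (g : 'M[int]_2) v : \det g = 1 -> prim v -> prim (act g v).
Proof.
rewrite detE /prim /act /= => dt /coprimezP [[u1 u2] /= hu].
apply/coprimezP; exists (u1 * md g - u2 * mc g, - u1 * mb g + u2 * ma g) => /=.
rewrite -[RHS]mulr1 -{1}dt -hu; ring.
Qed.

Lemma mobius_toM g x : mobius g x = mobius (toM (ma g) (mb g) (mc g) (md g)) x.
Proof. by rewrite /mobius !toM_a !toM_b !toM_c !toM_d. Qed.

Lemma act_toM a b c d v : act (toM a b c d) v = (a * v.1 + b * v.2, c * v.1 + d * v.2).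
Proof. by rewrite /act toM_a toM_b toM_c toM_d. Qed.

Lemma sq1 (e : int) : e * e = 1 -> e = 1 \/ e = -1.
Proof. move=> h; have : (e - 1) * (e + 1) = 0.
  have -> : (e - 1) * (e + 1) = e * e - 1 by ring.
  by rewrite h subrr.
by move/eqP; rewrite mulf_eq0 => /orP [/eqP h1|/eqP h1]; [left|right];
   [rewrite -[e](subrK 1) h1 add0r | rewrite -[e](addrK 1) h1 sub0r].
Qed.

Lemma equiv_to (n : nat) x y : (0 < n)%N -> Gamma_equiv n x y ->
  cpm n (R (phi n x)) (R (phi n y)).
Proof.
move=> n0 [g [[dt [dc hmod]] <-]].
have [k hk] := dvdzP dc.
set a := ma g in dt hmod *; set b := mb g in dt hk *; set c := mc g in dt hk *.
set d := md g in dt hmod *.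
have hc : c = n%:Z * (n%:Z * k) by rewrite hk PoszM; ring.
rewrite mobius_toM -/a -/b -/c -/d hc phi_mobius // -{2}(vcR (phi n x)).
set v := R (phi n x).
have pv : prim v by exact: primR.
rewrite mobius_vc; last exact: prim_nz.
set h := toM _ _ _ _.
have dth : \det h = 1 by rewrite det_toM -dt detE -/a -/b -/c -/d hc; ring.
have := prim_vc (prim_act dth pv) (erefl _) => /pm_or hR.
apply: cpm_sym; apply: (cpm_trans (cpm_sym (hR n))).
rewrite /h act_toM.
have [e [e2 [ha hd]]] : exists e : int, e * e = 1 /\ (n%:Z %| a - e)%Z /\ (n%:Z %| d - e)%Z.
  case: hmod => [[h1 h2]|[h1 h2]]; [exists 1|exists (-1)]; rewrite ?mulrNN mulr1;
  by split => //; rewrite -!eqz_mod_dvd; split; apply/eqP.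
exists e; split => //=; split.
  have -> : a * v.1 + n%:Z * b * v.2 - e * v.1 = v.1 * (a - e) + (b * v.2) * n%:Z by ring.
  by apply: dvd_lin2 => //; rewrite dvdzz.
have -> : n%:Z * k * v.1 + d * v.2 - e * v.2 = (k * v.1) * n%:Z + v.2 * (d - e) by ring.
by apply: dvd_lin2 => //; rewrite dvdzz.
Qed.


Lemma mx_lemma (n : int) (X Y X' Y' : int) :
  coprimez X Y -> coprimez X' Y' -> (n %| X' - X)%Z -> (n %| Y' - Y)%Z ->
  exists A B C D : int, A * D - B * C = 1 /\ (n %| A - 1)%Z /\ (n %| D - 1)%Z /\
    (n %| B)%Z /\ (n %| C)%Z /\ A * X + B * Y = X' /\ C * X + D * Y = Y'.
Proof.
move=> /coprimezP [[u1 u2] /= hu] /coprimezP [[z1 z2] /= hz] hX hY.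
set w := u1; set u := - u2.
have e : X * w - u * Y = 1 by rewrite -hu /w /u; ring.
set s := w * X' - u * Y'; set t := X * Y' - Y * X'.
have eX : X * s + u * t = X' by rewrite -[RHS]mulr1 -e /s /t; ring.
have eY : Y * s + w * t = Y' by rewrite -[RHS]mulr1 -e /s /t; ring.
have : coprimez s t.
  apply/coprimezP; exists (z1 * X + z2 * Y, z1 * u + z2 * w) => /=.
  by rewrite -hz -eX -eY; ring.
move=> /coprimezP [[l0 m0] /= hlm].
set k0 := - m0.
set k := k0 * (1 - s); set l := l0 - k0 * t.
have dl : s * l - t * k = 1 by rewrite -hlm /k /l /k0; ring.
have hs : (n %| s - 1)%Z.
  have -> : s - 1 = w * (X' - X) + (- u) * (Y' - Y) by rewrite -e /s; ring.
  exact: dvd_lin2.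
have ht : (n %| t)%Z.
  have -> : t = X * (Y' - Y) + (- Y) * (X' - X) by rewrite /t; ring.
  exact: dvd_lin2.
have hk : (n %| k)%Z.
  have -> : k = (- k0) * (s - 1) + 0 * t by rewrite /k; ring.
  exact: dvd_lin2.
have hl : (n %| l - 1)%Z.
  have -> : l - 1 = (- l) * (s - 1) + k * t + (s * l - t * k - 1) by ring.
  by rewrite dl subrr addr0; apply: dvd_lin2.
exists ((X * s + u * t) * w - (X * k + u * l) * Y).
exists (- (X * s + u * t) * u + (X * k + u * l) * X).
exists ((Y * s + w * t) * w - (Y * k + w * l) * Y).
exists (- (Y * s + w * t) * u + (Y * k + w * l) * X).
split.
  set A := _ * _ - _ * _.
  have -> : A = (X * w - u * Y) ^+ 2 * (s * l - t * k) by rewrite /A; ring.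
  by rewrite e dl expr1n mulr1.
split.
  have -> : (X * s + u * t) * w - (X * k + u * l) * Y - 1 =
    (w * X) * (s - 1) + (u * w) * t + (- X * Y) * k + (- u * Y) * (l - 1)
     + (X * w - u * Y - 1) by ring.
  by rewrite e subrr addr0; apply: dvd_lin4.
split.
  have -> : - (Y * s + w * t) * u + (Y * k + w * l) * X - 1 =
    (- Y * u) * (s - 1) + (- w * u) * t + (Y * X) * k + (w * X) * (l - 1)
     + (X * w - u * Y - 1) by ring.
  by rewrite e subrr addr0; apply: dvd_lin4.
split.
  have -> : - (X * s + u * t) * u + (X * k + u * l) * X =
    (- X * u) * (s - 1) + (- u * u) * t + (X * X) * k + (u * X) * (l - 1) by ring.
  exact: dvd_lin4.
split.
  have -> : (Y * s + w * t) * w - (Y * k + w * l) * Y =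
    (Y * w) * (s - 1) + (w * w) * t + (- Y * Y) * k + (- w * Y) * (l - 1) by ring.
  exact: dvd_lin4.
split.
  rewrite -eX; set A := LHS.
  have -> : A = (X * s + u * t) * (X * w - u * Y) by rewrite /A; ring.
  by rewrite e mulr1.
rewrite -eY; set A := LHS.
have -> : A = (Y * s + w * t) * (X * w - u * Y) by rewrite /A; ring.
by rewrite e mulr1.
Qed.

Lemma equiv_from (n : nat) x y : (0 < n)%N ->
  cpm n (R (phi n x)) (R (phi n y)) -> Gamma_equiv n x y.
Proof.
move=> n0 [e [e2 [h1 h2]]].
set v := R (phi n x) in h1 h2; set w := R (phi n y) in h1 h2.
have pv : prim v by exact: primR.
have pw : prim w by exact: primR.
set w' := (e * w.1, e * w.2).
have pw' : coprimez w'.1 w'.2.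
  by rewrite /w' /=; case: (sq1 e2) => -> /=; rewrite ?mul1r ?mulN1r ?coprimeNz ?coprimezN.
have hX : (n%:Z %| w'.1 - v.1)%Z by rewrite -rpredN opprB.
have hY : (n%:Z %| w'.2 - v.2)%Z by rewrite -rpredN opprB.
have [A [B [C [D [dt [hA [hD [hB [hC [eX eY]]]]]]]]]] := mx_lemma pv pw' hX hY.
have [B' eB] := dvdzP hB.
exists (toM A B' (n%:Z * C) D); split.
  split; first by rewrite det_toM -dt eB; ring.
  split.
    rewrite toM_c; have [C' eC] := dvdzP hC.
    by apply/dvdzP; exists C'; rewrite eC PoszM; ring.
  by left; rewrite toM_a toM_d; split; apply/eqP; rewrite eqz_mod_dvd.
apply: (phi_inj n0); rewrite phi_mobius //.
have -> : n%:Z * B' = B by rewrite eB mulrC.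
rewrite -(vcR (phi n x)) -/v mobius_vc; last exact: prim_nz.
rewrite act_toM eX eY -(vcR (phi n y)) -/w.
rewrite /w' /=; case: (sq1 e2) => ->; rewrite ?mul1r; first by case: (w).
by rewrite -[in RHS]vc_neg /negv !mulN1r.
Qed.


Definition Cset (n : nat) : {set 'I_n * 'I_n} :=
  [set c : 'I_n * 'I_n | coprime (gcdn c.1 c.2) n].

Lemma negI_lt n (i : 'I_n) : ((if i == 0 :> nat then 0 else n - i) < n)%N.
Proof. case: i => k hk /=; case: eqP => [_|/eqP]; lia. Qed.

Definition negI n (i : 'I_n) : 'I_n := Ordinal (negI_lt i).
Definition negc n (c : 'I_n * 'I_n) := (negI c.1, negI c.2).
Definition ivec n (c : 'I_n * 'I_n) : int * int := ((c.1 : nat)%:Z, (c.2 : nat)%:Z).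

Lemma negI_invol n : involutive (@negI n).
Proof.
move=> i; apply: val_inj => /=; case: i => k hk /=.
case: (eqVneq k 0%N) => [->|h] //=.
have -> : (n - k == 0)%N = false by apply/negbTE; lia.
lia.
Qed.

Lemma negc_invol n : involutive (@negc n).
Proof. by case=> a b; rewrite /negc /= !negI_invol. Qed.

Lemma g3_eq (a b a' b' n : nat) :
  (forall d, (d %| n)%N -> (d %| a)%N = (d %| a')%N) ->
  (forall d, (d %| n)%N -> (d %| b)%N = (d %| b')%N) ->
  gcdn (gcdn a b) n = gcdn (gcdn a' b') n.
Proof.
move=> ha hb; apply/eqP; rewrite eqn_dvd; apply/andP; split.
  set g := gcdn (gcdn a b) n.
  have gn : (g %| n)%N by rewrite dvdn_gcdr.
  have gab : (g %| gcdn a b)%N by rewrite dvdn_gcdl.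
  rewrite dvdn_gcd in gab; case/andP: gab => ga gb.
  by rewrite !dvdn_gcd gn -ha // -hb // ga gb.
set g := gcdn (gcdn a' b') n.
have gn : (g %| n)%N by rewrite dvdn_gcdr.
have gab : (g %| gcdn a' b')%N by rewrite dvdn_gcdl.
rewrite dvdn_gcd in gab; case/andP: gab => ga gb.
by rewrite !dvdn_gcd gn ha // hb // ga gb.
Qed.

Lemma negI_dvd n (i : 'I_n) d : (d %| n)%N -> (d %| negI i)%N = (d %| i)%N.
Proof.
move=> dn /=; case: eqP => [->|_] //.
by rewrite dvdn_subr ?dn // ltnW.
Qed.

Lemma negc_C n c : c \in Cset n -> negc c \in Cset n.
Proof.
rewrite !inE /coprime /negc /=.
by rewrite (@g3_eq (negI c.1) (negI c.2) c.1 c.2) // => d dn; rewrite negI_dvd.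
Qed.

Lemma negI_fix n (i : 'I_n) : i = negI i -> (n %| 2 * i)%N.
Proof.
case: i => k hk.
move/(congr1 val) => /=; case: eqP => [->|_ e]; first by rewrite muln0 dvdn0.
have -> : (2 * k = n)%N by lia.
exact: dvdnn.
Qed.

Lemma negc_neq n c : (3 <= n)%N -> c \in Cset n -> c != negc c.
Proof.
move=> n3; rewrite inE /coprime => /eqP cop; apply/eqP => e.
have h1 : (n %| 2 * c.1)%N by apply: negI_fix; rewrite {1}e.
have h2 : (n %| 2 * c.2)%N by apply: negI_fix; rewrite {1}e.
have : (n %| gcdn (gcdn (2 * c.1) (2 * c.2)) (2 * n))%N.
  by rewrite !dvdn_gcd h1 h2 dvdn_mull.
rewrite -!muln_gcdr cop muln1 => /dvdn_leq; lia.
Qed.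

Lemma lift_ex (a b n : nat) : (0 < a)%N -> (0 < b)%N -> coprime (gcdn a b) n ->
  coprime (a + partn b (\pi(a))^' * n) b.
Proof.
move=> a0 b0 cop.
set k := partn b (\pi(a))^'.
have cak : coprime a k by rewrite -{1}(partn_pi a0) coprime_partC.
apply/negPn/negP => ncop.
set g := gcdn (a + k * n) b.
have g0 : (0 < g)%N by rewrite gcdn_gt0 b0 orbT.
have g1 : (1 < g)%N by move: ncop; rewrite /coprime -/g; lia.
set p := pdiv g.
have pp : prime p by exact: pdiv_prime.
have pg : (p %| g)%N by exact: pdiv_dvd.
have pab : (p %| a + k * n)%N by apply: dvdn_trans pg (dvdn_gcdl _ _).
have pb : (p %| b)%N by apply: dvdn_trans pg (dvdn_gcdr _ _).
case pk : (p %| k)%N.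
  have pa : (p %| a)%N by move: pab; rewrite dvdn_addl // dvdn_mulr.
  have : (p %| gcdn a k)%N by rewrite dvdn_gcd pa pk.
  by rewrite (eqP cak) dvdn1 => /eqP p1; rewrite p1 in pp.
have pa : (p %| a)%N.
  apply/negPn/negP => npa.
  have pi' : p \in (\pi(a))^'.
    by rewrite inE /= mem_primes pp a0 /= npa.
  have : (partn p (\pi(a))^' %| k)%N by apply: partn_dvd.
  by rewrite part_pnat_id ?pk //; apply: pi_pnat (pnat_id pp) _.
have pkn : (p %| k * n)%N by move: pab; rewrite dvdn_addr.
rewrite Euclid_dvdM // pk /= in pkn.
have : (p %| gcdn (gcdn a b) n)%N by rewrite !dvdn_gcd pa pb pkn.
by rewrite (eqP cop) dvdn1 => /eqP p1; rewrite p1 in pp.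
Qed.

Definition rep0 (n a : nat) : nat := if a == 0%N then n else a.

Definition liftv n (c : 'I_n * 'I_n) : int * int :=
  let a := rep0 n c.1 in let b := rep0 n c.2 in
  ((a + partn b (\pi(a))^' * n)%N%:Z, b%:Z).

Lemma rep0_dvd n a d : (d %| n)%N -> (d %| rep0 n a)%N = (d %| a)%N.
Proof. by rewrite /rep0; case: eqP => [->|] // ->; rewrite dvdn0. Qed.

Lemma liftv_prim n (c : 'I_n * 'I_n) : (0 < n)%N -> c \in Cset n -> prim (liftv c).
Proof.
move=> n0; rewrite inE => cop; rewrite /prim /liftv /= coprimezE /=.
apply: lift_ex; rewrite ?/rep0; try by case: eqP => //; lia.
by rewrite /coprime (@g3_eq _ _ c.1 c.2) // => d dn; rewrite rep0_dvd.
Qed.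

Lemma liftv_cpm n (c : 'I_n * 'I_n) : cpm n (liftv c) (ivec c).
Proof.
exists 1; split; first by rewrite mulr1.
rewrite /liftv /ivec /rep0 /= !mul1r; split.
  case: eqP => [->|_]; apply/dvdzP.
    by exists (1 + (partn (rep0 n c.2) (\pi(n))^')%:Z); rewrite /rep0; rewrite !PoszD !PoszM; ring.
  by exists ((partn (rep0 n c.2) (\pi(c.1))^')%:Z); rewrite /rep0 !PoszD !PoszM; ring.
by case: eqP => [->|_]; apply/dvdzP; [exists 1 | exists 0]; ring.
Qed.

Lemma modz_lt (n : nat) (m : int) : (0 < n)%N -> (`|(m %% n%:Z)%Z| < n)%N.
Proof.
move=> n0; have h1 := @ltz_pmod m n%:Z.
have h2 := @modz_ge0 m n%:Z.
have : (m %% n%:Z)%Z = `|(m %% n%:Z)%Z|%:Z by rewrite gez0_abs // h2 //; lia.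
move: (`|(m %% n%:Z)%Z|) => k ->; move: h1; lia.
Qed.

Lemma dvdz_nat (a b : nat) : ((a%:Z %| b%:Z)%Z) = (a %| b)%N.
Proof. by []. Qed.

Lemma class_ex n w : (0 < n)%N -> prim w ->
  exists2 c : 'I_n * 'I_n, c \in Cset n & cpm n w (ivec c).
Proof.
move=> n0 pw.
have e1 : `|(w.1 %% n%:Z)%Z|%:Z = (w.1 %% n%:Z)%Z by rewrite gez0_abs // modz_ge0 //; lia.
have e2 : `|(w.2 %% n%:Z)%Z|%:Z = (w.2 %% n%:Z)%Z by rewrite gez0_abs // modz_ge0 //; lia.
exists (Ordinal (modz_lt w.1 n0), Ordinal (modz_lt w.2 n0)).
  rewrite inE /= /coprime.
  set g := gcdn (gcdn _ _) n.
  have gn : (g %| n)%N by rewrite dvdn_gcdr.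
  have gab : (g %| gcdn `|(w.1 %% n%:Z)%Z| `|(w.2 %% n%:Z)%Z|)%N by rewrite dvdn_gcdl.
  rewrite dvdn_gcd in gab; case/andP: gab => ga gb.
  have gw1 : (g%:Z %| w.1)%Z.
    rewrite (divz_eq w.1 n%:Z) -e1 -[X in (_ + X)%R]mul1r.
    by apply: dvd_lin2; rewrite dvdz_nat.
  have gw2 : (g%:Z %| w.2)%Z.
    rewrite (divz_eq w.2 n%:Z) -e2 -[X in (_ + X)%R]mul1r.
    by apply: dvd_lin2; rewrite dvdz_nat.
  move: pw; rewrite /prim => /coprimezP [[u v] /= h].
  have : (g%:Z %| u * w.1 + v * w.2)%Z by apply: dvd_lin2.
  by rewrite h dvdzE /= dvdn1.
exists 1; split; first by rewrite mulr1.
rewrite /ivec /= !mul1r e1 e2; split.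
  by rewrite {1}(divz_eq w.1 n%:Z) addrK dvdz_mull // dvdzz.
by rewrite {1}(divz_eq w.2 n%:Z) addrK dvdz_mull // dvdzz.
Qed.

Lemma nat_cong_eq (n x y : nat) : (x < n)%N -> (y < n)%N ->
  (n%:Z %| x%:Z - y%:Z)%Z -> x = y.
Proof.
move=> hx hy /dvdzP [q hq].
have : (q <= -1) \/ q = 0 \/ (1 <= q) by lia.
case=> [h|[h|h]]; nia.
Qed.

Lemma nat_cong_neg (n x y : nat) : (x < n)%N -> (y < n)%N ->
  (n%:Z %| x%:Z + y%:Z)%Z -> x = (if y == 0%N then 0%N else (n - y)%N).
Proof.
move=> hx hy /dvdzP [q hq].
have : (q <= -1) \/ q = 0 \/ q = 1 \/ (2 <= q) by lia.
case: eqP => [y0|y0]; case=> [h|[h|[h|h]]]; nia.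
Qed.

Lemma ivec_cpm_eq n (c c' : 'I_n * 'I_n) : cpm n (ivec c) (ivec c') -> c = c' \/ c = negc c'.
Proof.
case: c c' => [a b] [a' b'] [e [e2 [h1 h2]]]; rewrite /ivec /= in h1 h2.
case: (sq1 e2) => ee; rewrite ee ?mul1r ?mulN1r ?opprK in h1 h2.
  by left; congr pair; apply: val_inj; [exact: nat_cong_eq h1 | exact: nat_cong_eq h2].
by right; congr pair; apply: val_inj; [exact: nat_cong_neg h1 | exact: nat_cong_neg h2].
Qed.

Lemma negc_cpm n (c : 'I_n * 'I_n) : cpm n (ivec (negc c)) (ivec c).
Proof.
exists (-1); split; first by rewrite mulrNN mulr1.
rewrite /ivec /negc /= !mulN1r !opprK.
case: c => [[a ha] [b hb]] /=; split.
  by case: eqP => [->|_]; apply/dvdzP; [exists 0 | exists 1]; rewrite ?mul0r ?mul1r; lia.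
by case: eqP => [->|_]; apply/dvdzP; [exists 0 | exists 1]; rewrite ?mul0r ?mul1r; lia.
Qed.


Local Close Scope ring_scope.

Lemma dvdn_modm d m x : (d %| m)%N -> (d %| x %% m)%N = (d %| x)%N.
Proof. by move=> dm; rewrite {2}(divn_eq x m) dvdn_addr // dvdn_mull. Qed.

Lemma cop_mod a b m : coprime (gcdn (a %% m) (b %% m)) m = coprime (gcdn a b) m.
Proof. by rewrite /coprime (@g3_eq _ _ a b) // => d dm; rewrite dvdn_modm. Qed.

Section Mult.
Variables m n : nat.
Hypotheses (m0 : (0 < m)%N) (n0 : (0 < n)%N) (cop : coprime m n).

Definition modI k (k0 : (0 < k)%N) (x : nat) : 'I_k := Ordinal (ltn_pmod x k0).

Definition hmap (c : 'I_(m * n) * 'I_(m * n)) :=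
  ((modI m0 c.1, modI m0 c.2), (modI n0 c.1, modI n0 c.2)).

Lemma hmap_inj : injective hmap.
Proof.
move=> [[x hx] [y hy]] [[x' hx'] [y' hy']] [] /= e1 e2 e3 e4.
have ex : x = x'.
  have : (x == x' %[mod m * n])%N by rewrite chinese_remainder // e1 e3 !eqxx.
  by rewrite !modn_small // => /eqP.
have ey : y = y'.
  have : (y == y' %[mod m * n])%N by rewrite chinese_remainder // e2 e4 !eqxx.
  by rewrite !modn_small // => /eqP.
by subst; congr pair; apply: val_inj.
Qed.

Lemma hmap_im : hmap @: Cset (m * n) = setX (Cset m) (Cset n).
Proof.
apply/setP => [[[a1 a2] [b1 b2]]]; rewrite !inE /=.
apply/imsetP/andP => [[c] | [ca cb]].
  rewrite inE coprimeMr => /andP [cm cn] [-> -> -> ->] /=.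
  by rewrite !cop_mod cm cn.
have mn0 : (0 < m * n)%N by rewrite muln_gt0 m0 n0.
have dm : (m %| m * n)%N := dvdn_mulr _ (dvdnn m).
have dn : (n %| m * n)%N := dvdn_mull _ (dvdnn n).
exists (modI mn0 (chinese m n a1 b1), modI mn0 (chinese m n a2 b2)).
  rewrite inE /= coprimeMr -(cop_mod _ _ m) -[in X in _ && X](cop_mod _ _ n) /=.
  rewrite !(modn_dvdm _ dm) !(modn_dvdm _ dn).
  by rewrite !chinese_modl // !chinese_modr // !modn_small // ca cb.
rewrite /hmap /=; congr pair; congr pair; apply: val_inj => /=.
- by rewrite (modn_dvdm _ dm) chinese_modl // modn_small.
- by rewrite (modn_dvdm _ dm) chinese_modl // modn_small.
- by rewrite (modn_dvdm _ dn) chinese_modr // modn_small.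
- by rewrite (modn_dvdm _ dn) chinese_modr // modn_small.
Qed.

Lemma J2_mul : #|Cset (m * n)| = (#|Cset m| * #|Cset n|)%N.
Proof. by rewrite -cardsX -hmap_im card_imset //; exact: hmap_inj. Qed.

End Mult.

Section PP.
Variables (p e : nat).
Hypotheses (pp : prime p) (e0 : (0 < e)%N).

Let q := (p ^ e.-1)%N.
Let N := (p ^ e)%N.
Lemma NE : N = (p * q)%N. Proof. by rewrite /N /q -expnS prednK. Qed.
Lemma N0 : (0 < N)%N. Proof. by rewrite expn_gt0 prime_gt0. Qed.

Lemma mulp_lt (i : 'I_q) : (p * i < N)%N.
Proof. by rewrite NE ltn_pmul2l ?prime_gt0. Qed.

Definition mulp (c : 'I_q * 'I_q) : 'I_N * 'I_N :=
  (Ordinal (mulp_lt c.1), Ordinal (mulp_lt c.2)).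

Lemma mulp_inj : injective mulp.
Proof.
move=> [a b] [a' b'] [] /= /eqP e1 /eqP e2.
rewrite !eqn_pmul2l ?prime_gt0 // in e1 e2.
by congr pair; apply: val_inj; apply/eqP.
Qed.

Lemma CsetC : ~: Cset N = mulp @: setT.
Proof.
apply/setP => [[a b]]; rewrite !inE /=.
rewrite /N coprime_pexpr // coprime_sym prime_coprime // dvdn_gcd negbK.
apply/andP/imsetP => [[/dvdnP [i ei] /dvdnP [j ej]] | [[i j] _ [-> ->]] /=]; last first.
  by rewrite !dvdn_mulr.
have hi : (i < q)%N.
  by have := ltn_ord a; rewrite ei -/N NE mulnC ltn_pmul2l ?prime_gt0.
have hj : (j < q)%N.
  by have := ltn_ord b; rewrite ej -/N NE mulnC ltn_pmul2l ?prime_gt0.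
exists (Ordinal hi, Ordinal hj) => //.
by congr pair; apply: val_inj; rewrite /= mulnC.
Qed.

Lemma J2_pp : (#|Cset N| + q * q)%N = (N * N)%N.
Proof.
have := cardsC (Cset N); rewrite CsetC card_imset; last exact: mulp_inj.
by rewrite cardsT !card_prod !card_ord.
Qed.

End PP.


Local Open Scope ring_scope.

Definition Fp (m : nat) : rat := \prod_(p <- primes m) (1 - (((p ^ 2)%N)%:R)^-1).

Lemma Fp_mul m n : (0 < m)%N -> (0 < n)%N -> coprime m n -> Fp (m * n) = Fp m * Fp n.
Proof.
move=> m0 n0 cop; rewrite /Fp -big_cat; apply: perm_big.
apply: uniq_perm; first exact: primes_uniq.
  rewrite cat_uniq !primes_uniq andbT /=.
  by rewrite -coprime_has_primes.
by move=> x; rewrite primesM // mem_cat.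
Qed.

Lemma Fp_pp p e : prime p -> (0 < e)%N -> Fp (p ^ e) = 1 - (((p ^ 2)%N)%:R)^-1.
Proof. by move=> pp e0; rewrite /Fp primesX // primes_prime // big_seq1. Qed.

Lemma J2_formula n : (0 < n)%N -> (#|Cset n|)%:R = ((n ^ 2)%N)%:R * Fp n.
Proof.
elim/ltn_ind: n => n IH n0.
case: (leqP n 1) => [n1 | lt1n].
  have -> : n = 1%N by lia.
  have -> : Cset 1 = setT by apply/setP => c; rewrite !inE coprimen1.
  by rewrite cardsT card_prod card_ord /Fp big_nil mulr1.
pose p := pdiv n; have pp : prime p by apply: pdiv_prime.
pose np := (n`_p)%N; pose np' := (n`_p^')%N.
have co : coprime np np' by rewrite coprime_partC.
have np0 : (0 < np)%N by apply: part_gt0.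
have np'0 : (0 < np')%N by apply: part_gt0.
have def_n : n = (np * np')%N by rewrite partnC.
have e0 : (0 < logn p n)%N by rewrite lognE pp n0 pdiv_dvd.
have np_e : np = (p ^ logn p n)%N by rewrite /np p_part.
have lt_np' : (np' < n)%N.
  rewrite [X in (_ < X)%N]def_n ltn_Pmull // np_e -{1}(expn0 p) ltn_exp2l ?prime_gt1 //.
rewrite def_n J2_mul // Fp_mul // natrM (IH _ lt_np' np'0).
have := J2_pp pp e0; rewrite -np_e => hpp.
rewrite np_e Fp_pp // -np_e.
set q := (p ^ (logn p n).-1)%N in hpp.
have hq : np = (p * q)%N by rewrite np_e /q -expnS prednK.
have -> : #|Cset np| = (np * np - q * q)%N by rewrite -hpp addnK.
rewrite natrB; last by rewrite -hpp leq_addl.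
rewrite hq !natrX !natrM.
have p0 : (p%:R : rat) != 0 by rewrite pnatr_eq0 -lt0n prime_gt0.
by field.
Qed.


Definition Bset n : {set 'I_n * 'I_n} := [set c | (enum_rank c < enum_rank (negc c))%N].
Definition Sset n := Cset n :&: Bset n.
Definition slist n := map (fun c => psi n (vc (liftv c))) (enum (Sset n)).

Lemma rank_neq n (c : 'I_n * 'I_n) : (3 <= n)%N -> c \in Cset n ->
  (enum_rank c : nat) != enum_rank (negc c).
Proof.
move=> n3 cC; apply/negP => /eqP /val_inj /enum_rank_inj e.
by move: (negc_neq n3 cC); rewrite -e eqxx.
Qed.

Lemma card_S n : (3 <= n)%N -> #|Cset n| = (2 * #|Sset n|)%N.
Proof.
move=> n3; rewrite -(cardsID (Bset n) (Cset n)) -/(Sset n).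
have -> : Cset n :\: Bset n = (@negc n) @: Sset n.
  apply/setP => c; rewrite in_setD; apply/andP/imsetP.
    move=> [nB cC]; exists (negc c); last by rewrite negc_invol.
    rewrite /Sset in_setI negc_C //= inE negc_invol.
    have := rank_neq n3 cC; move: nB; rewrite inE; lia.
  move=> [d]; rewrite /Sset in_setI => /andP [dC dB] ->.
  split; last exact: negc_C.
  by move: dB; rewrite !inE negc_invol; lia.
rewrite card_imset ?addnn ?mul2n //; exact: (can_inj (@negc_invol n)).
Qed.

Lemma Rvc_cpm n t : prim t -> cpm n (R (vc t)) t.
Proof. by move=> pt; apply: cpm_sym; apply: pm_or; apply: prim_vc. Qed.

Theorem proposition7p4 (n : nat) : (3 <= n)%N ->
  exists s : seq cuspQ, cusp_transversal n s /\ (size s)%:R = cusp_formula n.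
Proof.
move=> n3; have n0 : (0 < n)%N by lia.
pose c0 : 'I_n * 'I_n := (Ordinal n0, Ordinal n0).
exists (slist n); split; last first.
  rewrite size_map -cardE /cusp_formula -/(Fp n).
  have h := J2_formula n0; rewrite card_S // natrM in h.
  have two : (2%:R : rat) != 0 by [].
  by apply: (mulfI two); rewrite h; field.
split.
  move=> i j; rewrite size_map => hi hj ij.
  rewrite !(nth_map c0) // => /(@equiv_to n _ _ n0); rewrite !phi_psi //.
  set ci := nth c0 _ i; set cj := nth c0 _ j => h.
  have ciS : ci \in Sset n by rewrite -mem_enum mem_nth.
  have cjS : cj \in Sset n by rewrite -mem_enum mem_nth.
  have ciC : ci \in Cset n by move: ciS; rewrite inE => /andP [].
  have cjC : cj \in Cset n by move: cjS; rewrite inE => /andP [].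
  have : cpm n (ivec ci) (ivec cj).
    apply: (cpm_trans (cpm_sym (liftv_cpm ci))).
    apply: (cpm_trans (cpm_sym (Rvc_cpm n (liftv_prim n0 ciC)))).
    apply: (cpm_trans h).
    apply: (cpm_trans (Rvc_cpm n (liftv_prim n0 cjC))).
    exact: liftv_cpm.
  case/ivec_cpm_eq => e.
    by apply: ij; apply/eqP; rewrite -(nth_uniq c0 hi hj (enum_uniq _)) -/ci -/cj e.
  move: ciS cjS; rewrite !inE e negc_invol => /andP [_ h1] /andP [_ h2].
  move: h1 h2; lia.
move=> x.
have [c cC hw] := class_ex n0 (primR (phi n x)).
case cB : (c \in Bset n).
  exists (psi n (vc (liftv c))).
    by apply: map_f; rewrite mem_enum inE cC cB.
  apply: (@equiv_from n _ _ n0); rewrite phi_psi //.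
  apply: (cpm_trans (Rvc_cpm n (liftv_prim n0 cC))).
  apply: (cpm_trans (liftv_cpm c)).
  exact: cpm_sym.
have dS : negc c \in Sset n.
  rewrite /Sset in_setI negc_C //= inE negc_invol.
  have := rank_neq n3 cC; move: cB; rewrite inE => /negbT; lia.
have dC : negc c \in Cset n by move: dS; rewrite inE => /andP [].
exists (psi n (vc (liftv (negc c)))).
  by apply: map_f; rewrite mem_enum.
apply: (@equiv_from n _ _ n0); rewrite phi_psi //.
apply: (cpm_trans (Rvc_cpm n (liftv_prim n0 dC))).
apply: (cpm_trans (liftv_cpm _)).
apply: (cpm_trans (negc_cpm c)).
exact: cpm_sym.
Qed.
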